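(* Let $3\le s\le t\le u$ be integers. (i) If $4\le s\le t\le u$, then $S(3;s,t,u)\ge stu-tu-u-1$. (ii) If either $3=t<u$ or $3<t\le u$, then $S(3;3,t,u)>2tu-u-1$.
   Context: For an integer $k\ge 3$, let $\mathcal{L}(k)$ denote the equation $x_1+x_2+\cdots+x_{k-1}=x_k$ in positive integer variables (the $x_i$ need not be distinct). For $N\ge1$, write $[1,N]=\{1,2,\dots,N\}$. For integers $r\ge1$ and $k_0,\dots,k_{r-1}\ge 3$, the generalized Schur number $S(r;k_0,\dots,k_{r-1})$ is the least positive integer $N$ such that for every coloring $\Delta:[1,N]\to\{0,1,\dots,r-1\}$ there exist some $i\in\{0,\dots,r-1\}$ and positive integers $x_1,\dots,x_{k_i}\in[1,N]$ satisfying $\mathcal{L}(k_i)$ with $\Delta(x_1)=\cdots=\Delta(x_{k_i})=i$. Thus $S(3;s,t,u)$ is the least $N$ such that every 3-coloring of $[1,N]$ has a monochromatic solution to $\mathcal{L}(s)$ in the first color, to $\mathcal{L}(t)$ in the second color, or to $\mathcal{L}(u)$ in the third color. *)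

(* Defs.v *)
From mathcomp Require Import all_boot.
Set Implicit Arguments. Unset Strict Implicit. Unset Printing Implicit Defensive.

(* [is_mono_sol Delta N i m] : there are positive integers x_1,...,x_m in [1,N]
   (indexed here 0..m-1) with x_1 + ... + x_{m-1} = x_m, all of color i. *)
Definition is_mono_sol (Delta : nat -> nat) (N i m : nat) : Prop :=
  exists x : nat -> nat,
    (forall j, j < m -> (1 <= x j <= N) /\ Delta (x j) = i) /\
    \sum_(j < m.-1) x j = x m.-1.

(* The generalized Schur number S(r; k_0,...,k_{r-1}) is the least N with
   this property. *)
Definition schur_prop (ks : seq nat) (N : nat) : Prop :=
  forall Delta : nat -> nat,
    (forall x, 1 <= x <= N -> Delta x < size ks) ->
    exists2 i, i < size ks & is_mono_sol Delta N i (nth 0 ks i).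

(* Main.v *)
Require Import Defs.
From mathcomp Require Import all_boot zify.

Definition SF (k : nat) (S : pred nat) : Prop :=
  forall x : nat -> nat, (forall j, j < k.-1 -> S (x j)) ->
    ~~ S (\sum_(j < k.-1) x j).

Lemma sum_ge_const n a (x : nat -> nat) :
  (forall j, j < n -> a <= x j) -> n * a <= \sum_(j < n) x j.
Proof.
elim: n => [|n IH] H; first by rewrite big_ord0.
rewrite big_ord_recr /= mulSn.
have h1 := IH (fun j Hj => H j (ltnW Hj)). have h2 := H n (ltnSn n). by rewrite addnC; apply: leq_add.
Qed.

Lemma sum_le_const n b (x : nat -> nat) :
  (forall j, j < n -> x j <= b) -> \sum_(j < n) x j <= n * b.
Proof.
elim: n => [|n IH] H; first by rewrite big_ord0.
rewrite big_ord_recr /= mulSn.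
have h1 := IH (fun j Hj => H j (ltnW Hj)). have h2 := H n (ltnSn n). by rewrite addnC; apply: leq_add.
Qed.

Lemma sum_ge_one n a (x : nat -> nat) (i : 'I_n) :
  (forall j, j < n -> a <= x j) -> x i + n.-1 * a <= \sum_(j < n) x j.
Proof.
move=> H; rewrite (bigD1 i) //= leq_add2l.
have -> : n.-1 = #|[pred j : 'I_n | j != i]|.
  by rewrite cardC1 card_ord.
rewrite -sum_nat_const; apply: leq_sum => j _; exact: H.
Qed.

Lemma sum_ge_two n (x : nat -> nat) (i j : 'I_n) :
  i != j -> x i + x j <= \sum_(l < n) x l.
Proof.
move=> Hij; rewrite (bigD1 i) //= leq_add2l (bigD1 j) //=; last by rewrite eq_sym.
exact: leq_addr.
Qed.

Lemma SF_int k a b : b < k.-1 * a -> SF k (fun y => a <= y <= b).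
Proof.
move=> Hb x Hx; apply/negP => /andP [_ H2].
have H := @sum_ge_const k.-1 a x (fun j Hj => (andP (Hx j Hj)).1); lia.
Qed.

Lemma SF_shift k (S : pred nat) c D :
  SF k S -> (forall y, S y -> 1 <= y <= c) -> k.-1 * c <= D -> c <= D ->
  SF k (fun y => S y || (D < y) && S (y - D)).
Proof.
move=> HS Hb Hkc HcD x Hx.
have Hb' : forall y, S y || (D < y) && S (y - D) -> 1 <= y <= D + c.
  move=> y /orP [/Hb|/andP [H1 /Hb]]; lia.
case: (boolP [exists i : 'I_k.-1, D < x i]) => [/existsP [i Hi] | Hno].
- case: (boolP [exists j : 'I_k.-1, (j != i) && (D < x j)]) =>
     [/existsP [j /andP [Hji Hj]] | Hno2].
  + apply/negP => /Hb'.
    have := @sum_ge_two _ x _ _ Hji; lia.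
  + pose x' := fun j : nat => if j == i then x i - D else x j.
    have Hx' : forall j, j < k.-1 -> S (x' j).
      move=> j Hj; rewrite /x'; case: eqP => [_|Hne].
      * have := Hx i (ltn_ord i) => /orP [/Hb|/andP [_ //]]; lia.
      * have := Hx j Hj => /orP [//|/andP [HDj _]].
        exfalso; move/negP: Hno2; apply; apply/existsP; exists (Ordinal Hj).
        rewrite HDj andbT; apply/eqP => /(congr1 val) /= E; exact: Hne.
    have Esum : \sum_(j < k.-1) x j = D + \sum_(j < k.-1) x' j.
      rewrite (bigD1 i) //= [in RHS](bigD1 i) //=.
      have -> : x' i = x i - D by rewrite /x' eqxx.
      have -> : \sum_(j < k.-1 | j != i) x' j = \sum_(j < k.-1 | j != i) x j.
        apply: eq_bigr => j Hj.
        have /negbTE E : (nat_of_ord j != nat_of_ord i) := Hj.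
        by rewrite /x' E.
      by rewrite addnA subnKC // ltnW.
    have := HS x' Hx'; apply: contra => /orP [/Hb|/andP [_]].
    * have := @sum_ge_one k.-1 0 x i (fun _ _ => leq0n _); rewrite Esum; lia.
    * by rewrite Esum addKn.
- have Hall : forall j, j < k.-1 -> S (x j).
    move=> j Hj; have := Hx j Hj => /orP [//|/andP [HDj _]].
    exfalso; move/negP: Hno; apply; apply/existsP; by exists (Ordinal Hj).
  have := HS x Hall; apply: contra => /orP [//|/andP [H1 _]].
  have H := @sum_le_const k.-1 c x (fun j Hj => (andP (Hb _ (Hall j Hj))).2); lia.
Qed.

Lemma SF_two k a b p q : 1 <= a -> a <= p -> b < k.-1 * a -> k.-1 * b < p -> b < p ->
  q < p + (k.-1).-1 * a -> SF k (fun y => (a <= y <= b) || (p <= y <= q)).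
Proof.
move=> Ha Hap H1 H2 H3 H4 x Hx.
have Hge : forall j, j < k.-1 -> a <= x j.
  by move=> j /Hx /orP [/andP [? _]|/andP [? _]]; lia.
case: (boolP [exists i : 'I_k.-1, p <= x i]) => [/existsP [i Hi] | Hno].
- have H := @sum_ge_one k.-1 a x i Hge; apply/negP; lia.
- have Hle : forall j, j < k.-1 -> x j <= b.
    move=> j Hj; have := Hx j Hj => /orP [/andP [_ //]|/andP [Hp _]].
    exfalso; move/negP: Hno; apply; apply/existsP; by exists (Ordinal Hj).
  have H5 := @sum_le_const k.-1 b x Hle.
  have H6 := @sum_ge_const k.-1 a x Hge.
  apply/negP; lia.
Qed.

Lemma SF_C k a m : 1 <= a -> 2 <= k.-1 -> m = k.-1 * a ->
  SF k (fun y => (a <= y <= m.+1) && (y != a.+1) && (y != m)).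
Proof.
move=> Ha Hk Hm x Hx.
have Hge : forall j, j < k.-1 -> a <= x j.
  by move=> j /Hx /andP [/andP [/andP [? _] _] _].
case: (boolP [exists i : 'I_k.-1, x i != a]) => [/existsP [i Hi] | Hno].
- have H := @sum_ge_one k.-1 a x i Hge.
  have := Hx i (ltn_ord i) => /andP [/andP [/andP [H1 _] H2] _].
  apply/negP; lia.
- have Hle : forall j, j < k.-1 -> x j <= a.
    move=> j Hj; case: (eqVneq (x j) a) => [->//|Hne].
    exfalso; move/negP: Hno; apply; apply/existsP; by exists (Ordinal Hj).
  have H5 := @sum_le_const k.-1 a x Hle.
  have H6 := @sum_ge_const k.-1 a x Hge.
  apply/negP; lia.
Qed.

Lemma no_schur k0 k1 k2 (A B C : pred nat) N N' :
  3 <= k0 -> 3 <= k1 -> 3 <= k2 -> SF k0 A -> SF k1 B -> SF k2 C ->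
  (forall y, 1 <= y <= N -> [|| A y, B y | C y]) -> N' <= N ->
  ~ schur_prop [:: k0; k1; k2] N'.
Proof.
move=> H0 H1 H2 SA SB SC Hcov HN Hs.
pose Delta y := if A y then 0 else if B y then 1 else 2.
have [i Hi [x [Hx Hsum]]] := Hs Delta (fun y _ => ltac:(rewrite /Delta; case: (A y); last case: (B y); done)).
have key : forall (P : pred nat) k, 3 <= k -> SF k P ->
    (forall j, j < k -> P (x j)) -> \sum_(j < k.-1) x j = x k.-1 -> False.
  move=> P k Hk SP HP Hsum'.
  have := SP x (fun j Hj => HP j (leq_trans Hj (leq_pred k))).
  by rewrite Hsum' HP // ltn_predL; lia.
case: i Hi Hx Hsum => [|[|[|i]]] //= _ Hx Hsum.
- apply: (key A k0 H0 SA _ Hsum) => j Hj; have [_ ] := Hx j Hj.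
  by rewrite /Delta; case: (A (x j)) => //; case: (B (x j)).
- apply: (key B k1 H1 SB _ Hsum) => j Hj; have [_ ] := Hx j Hj.
  by rewrite /Delta; case: (A (x j)) => //; case: (B (x j)).
- apply: (key C k2 H2 SC _ Hsum) => j Hj; have [Hr ] := Hx j Hj.
  have := Hcov (x j) ltac:(lia).
  by rewrite /Delta; case: (A (x j)) => //; case: (B (x j)).
Qed.

Lemma g1 a b : 1 <= a -> a <= b -> a * (a - 1) <= b * a - 1.
Proof. move=> h1 h2. have : a * a <= b * a by apply: leq_mul. nia. Qed.
Lemma g2 b v c : 1 <= b -> b <= v -> b * c <= v * (c + 1) - 1.
Proof. move=> h1 h2. have : b * c <= v * c by apply: leq_mul. nia. Qed.
Lemma g3 s t u : 4 <= s -> s <= t -> t <= u ->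
  s * t * u - t * u - u - 1 = (u - 1) * ((t - 1) * (s - 1) - 1 + (s - 2) + 1) - 1 + ((t - 1) * (s - 1) - 1 + (s - 2)) + 1.
Proof.
move=> h1 h2 h3.
have -> : (t - 1) * (s - 1) - 1 + (s - 2) + 1 = s * t - t - 1 by nia.
have e2 : u * (s * t - t - 1) = s * t * u - t * u - u.
  by rewrite !mulnBr muln1 mulnA [u * s]mulnC [u * t]mulnC [s * u * t]mulnAC.
have e1 : (u - 1) * (s * t - t - 1) = u * (s * t - t - 1) - (s * t - t - 1) by rewrite mulnBl mul1n.
have p1 : 2 * t <= s * t by apply: leq_mul (_ : 2 <= s) (leqnn t); lia.
have p2 : 2 * (s * t - t - 1) <= u * (s * t - t - 1) by apply: leq_mul (_ : 2 <= u) (leqnn _); lia.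
lia.
Qed.

Lemma part_i_gen s t u c1 D2 c2 D3 N' :
  3 <= s -> 3 <= t -> 3 <= u -> c1 = s - 2 -> c2 = D2 + c1 ->
  c1 < s.-1 * 1 -> s.-1 * c1 <= D2 -> c1 <= D2 -> D2 < t.-1 * s.-1 ->
  s.-1 * c2 <= D3 -> t.-1 * c2 <= D3 -> c2 <= D3 -> D3 < u.-1 * (c2 + 1) ->
  N' <= D3 + c2 -> ~ schur_prop [:: s; t; u] N'.
Proof.
move=> Hs Ht Hu E1 E2 h1 h2 h3 h4 h5 h6 h7 h8 HN.
pose A1 := fun y => 1 <= y <= c1.
have SA1 : SF s A1 by apply: SF_int.
pose A2 := fun y => A1 y || (D2 < y) && A1 (y - D2).
have SA2 : SF s A2 by apply: (@SF_shift s A1 c1 D2 SA1) => // y; rewrite /A1.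
pose B2 := fun y => s.-1 <= y <= D2.
have SB2 : SF t B2 by apply: SF_int.
pose A3 := fun y => A2 y || (D3 < y) && A2 (y - D3).
have SA3 : SF s A3.
  apply: (@SF_shift s A2 c2 D3 SA2) => // y; rewrite /A2 /A1; lia.
pose B3 := fun y => B2 y || (D3 < y) && B2 (y - D3).
have SB3 : SF t B3.
  apply: (@SF_shift t B2 c2 D3 SB2) => // y; rewrite /B2; lia.
pose C3 := fun y => c2 + 1 <= y <= D3.
have SC3 : SF u C3 by apply: SF_int.
apply: (@no_schur s t u A3 B3 C3 (D3 + c2) N' Hs Ht Hu SA3 SB3 SC3 _ HN) => y Hy.
rewrite /A3 /A2 /A1 /B3 /B2 /C3; lia.
Qed.

Lemma part_ii_gen t u m N' :
  3 <= t -> 4 <= u -> t <= u -> m = u.-1 * (2 * t - 1) ->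
  N' <= m + 2 * t - 2 -> ~ schur_prop [:: 3; t; u] N'.
Proof.
move=> Ht Hu Htu Em HN.
have Hm : 6 * t - 3 <= m.
  rewrite Em; apply: (@leq_trans (3 * (2 * t - 1))); first lia.
  by apply: leq_mul => //; lia.
have Hm2 : t.-1 * (2 * t - 3) < m + 3.
  rewrite Em; apply: (@leq_trans (t.-1 * (2 * t - 1)).+1).
    rewrite ltnS; apply: leq_mul => //; lia.
  rewrite -addn1 leq_add // leq_mul //; lia.
pose A := fun y => [|| y == 1, y == 2 * t - 2, y == 2 * t, y == m | y == m + 2].
have SA : SF 3 A.
  move=> x Hx; rewrite /= !big_ord_recr big_ord0 /=.
  have := Hx 0 isT; have := Hx 1 isT; rewrite /A; lia.
pose B := fun y => (2 <= y <= 2 * t - 3) || (m + 3 <= y <= m + 2 * t - 2).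
have SB : SF t B by apply: SF_two => //; lia.
pose C := fun y => (2 * t - 1 <= y <= m.+1) && (y != (2 * t - 1).+1) && (y != m).
have SC : SF u C by apply: SF_C => //; lia.
apply: (@no_schur 3 t u A B C (m + 2 * t - 2) N' isT Ht (leq_trans Ht Htu) SA SB SC _ HN) => y Hy.
rewrite /A /B /C; lia.
Qed.

Lemma part_i_nums s t u N : 4 <= s -> s <= t -> t <= u ->
  N < s * t * u - t * u - u - 1 -> ~ schur_prop [:: s; t; u] N.
Proof.
move=> Hs4 Hst Htu Hlt.
have E := @g3 s t u Hs4 Hst Htu.
have Ha : 1 <= s - 1 by lia.
have Hb : s - 1 <= t - 1 by lia.
have Hv : t - 1 <= u - 1 by lia.
have q1 : (s - 1) * (s - 2) <= (t - 1) * (s - 1) - 1 by have := @g1 _ _ Ha Hb; rewrite -subnDA.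
have q5 : 1 <= (t - 1) * (s - 1) by rewrite muln_gt0; lia.
move: E q1 q5.
set D2 := (t - 1) * (s - 1) - 1.
set P := (t - 1) * (s - 1).
set c2 := D2 + (s - 2).
move=> E q1 q5.
have q2 := @g2 _ _ c2 Ha (leq_trans Hb Hv).
have q3 := @g2 _ _ c2 (leq_trans Ha Hb) Hv.
have q4 := @g2 _ _ c2 (isT : 1 <= 1) (leq_trans Ha (leq_trans Hb Hv)).
have q6 : 1 <= (u - 1) * (c2 + 1) by rewrite muln_gt0; lia.
have q7 : (s - 1) * (s - 2) >= s - 2 by rewrite leq_pmull; lia.
move: E q2 q3 q4 q6 q7.
set D3 := (u - 1) * (c2 + 1) - 1.
set Q := (u - 1) * (c2 + 1).
move=> E q2 q3 q4 q6 q7.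
rewrite mul1n in q4.
have Hs : 3 <= s by lia.
have Ht : 3 <= t by lia.
have Hu : 3 <= u by lia.
apply: (@part_i_gen s t u (s - 2) D2 c2 D3 N Hs Ht Hu erefl erefl); rewrite -?subn1 ?muln1; try lia.
Qed.

Theorem proposition1 (s t u : nat) :
  3 <= s -> s <= t -> t <= u ->
  ((4 <= s ->
      forall N, schur_prop [:: s; t; u] N -> s * t * u - t * u - u - 1 <= N)
   /\
   (s = 3 -> ((3 = t /\ t < u) \/ (3 < t /\ t <= u)) ->
      forall N, schur_prop [:: 3; t; u] N -> 2 * t * u - u - 1 < N)).
Proof.
move=> Hs Hst Htu; split.
- move=> Hs4 N HN; case: (leqP (s * t * u - t * u - u - 1) N) => // Hlt.
  by exfalso; exact: (@part_i_nums s t u N Hs4 Hst Htu Hlt HN).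
- move=> Es Hor N HN; case: (ltnP (2 * t * u - u - 1) N) => // Hle.
  exfalso.
  have Hu : 4 <= u by lia.
  have Ht : 3 <= t by lia.
  have e : (u - 1) * (2 * t - 1) + 2 * t - 2 = 2 * t * u - u - 1.
    have h1 : (u - 1) * (2 * t - 1) = u * (2 * t) - u - 2 * t + 1.
      rewrite mulnBr mulnBl muln1 mul1n.
      have : 2 * t <= u * (2 * t) by apply: leq_pmull; lia.
      have : u * 3 <= u * (2 * t) by apply: leq_mul => //; lia.
      have : 1 <= u by lia.
      lia.
    rewrite h1 [u * (2 * t)]mulnC.
    have : 2 * t * 4 <= 2 * t * u by apply: leq_mul (leqnn _) Hu.
    have : 6 * u <= 2 * t * u by apply: leq_mul (_ : 6 <= 2 * t) (leqnn _); lia.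
    lia.
  apply: (@part_ii_gen t u ((u - 1) * (2 * t - 1)) N) => //; first by rewrite subn1.
  lia.
Qed.
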